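(* Let $\Delta$ be a metrizable Choquet simplex, $G$ a countable abelian group, and $\psi\colon G\to\mathrm{Aff}(\Delta)$ a homomorphism whose image contains the constant function $1$. Make $G$ a partially ordered group with positive cone $G_+=\{g\in G:\psi(g)(x)>0\text{ for all }x\in\Delta\}\cup\{0\}$, and take as order unit any $g_0\in G$ with $\psi(g_0)=1$. Then every state on $(G,G_+,g_0)$ (an order preserving homomorphism $\omega\colon G\to\mathbb{R}$ with $\omega(g_0)=1$) is of the form $g\mapsto\psi(g)(x)$ for some $x\in\Delta$.
   Context: $\mathrm{Aff}(\Delta)$ denotes the space of continuous affine real valued functions on $\Delta$. *)

(* Defs.v *)
From HB Require Import structures.
From mathcomp Require Import all_boot all_order all_algebra.
From mathcomp Require Import all_classical all_reals all_analysis.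
Set Implicit Arguments. Unset Strict Implicit. Unset Printing Implicit Defensive.
Import Order.TTheory GRing.Theory Num.Theory.
Import numFieldTopology.Exports numFieldNormedType.Exports.
Local Open Scope classical_set_scope.
Local Open Scope ring_scope.

Section Simplex.
Variables (R : realType) (E : tvsType R).

Definition convex_set (D : set E) : Prop :=
  forall x y t, D x -> D y -> 0 <= t <= 1 -> D (t *: x + (1 - t) *: y).

Definition metrizable_set (D : set E) : Prop :=
  exists d : E -> E -> R,
    [/\ (forall x y, D x -> D y -> 0 <= d x y),
        (forall x y, D x -> D y -> (d x y = 0 <-> x = y)),
        (forall x y, D x -> D y -> d x y = d y x),
        (forall x y z, D x -> D y -> D z -> d x z <= d x y + d y z) &
        (forall x (A : set E), D x ->
           ((exists V, nbhs x V /\ D `&` V `<=` A) <->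
            (exists2 e : R, 0 < e & D `&` [set y | d x y < e] `<=` A)))].

Definition cone_of (D : set E) : set (E * R) :=
  [set p | exists t x, [/\ 0 <= t, D x & p = (t *: x, t)]].

Definition cone_le (D : set E) (u v : E * R) : Prop :=
  cone_of D (v.1 - u.1, v.2 - u.2).

Definition cone_span (D : set E) : set (E * R) :=
  [set u | exists a b, [/\ cone_of D a, cone_of D b & u = (a.1 - b.1, a.2 - b.2)]].

(** Choquet simplex (Phelps, Lectures on Choquet's theorem, ch. 10):
    a nonempty compact convex subset of a locally convex Hausdorff space
    whose cone is a lattice cone, i.e. P - P is a lattice for the order
    induced by P (existence of suprema; infima follow). *)
Definition choquet_simplex (D : set E) : Prop :=
  [/\ hausdorff_space E, D !=set0, compact D, convex_set D &
      forall u v, cone_span D u -> cone_span D v ->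
        exists w, [/\ cone_span D w, cone_le D u w, cone_le D v w &
          forall z, cone_span D z -> cone_le D u z -> cone_le D v z ->
            cone_le D w z]].

Definition is_aff (D : set E) (f : E -> R) : Prop :=
  {within D, continuous f} /\
  forall x y t, D x -> D y -> 0 <= t <= 1 ->
    f (t *: x + (1 - t) *: y) = t * f x + (1 - t) * f y.

End Simplex.

Section OrderedGroup.
Variables (R : realType) (E : tvsType R) (G : zmodType).

Definition pos_cone (D : set E) (psi : G -> E -> R) : set G :=
  [set g | (forall x, D x -> 0 < psi g x) \/ g = 0].

Definition is_state (Gpos : set G) (g0 : G) (w : G -> R) : Prop :=
  [/\ (forall g h, w (g + h) = w g + w h),
      (forall g h, Gpos (h - g) -> w g <= w h) &
      w g0 = 1].

End OrderedGroup.

(* Main.v *)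
Require Import Defs.
From HB Require Import structures.
From mathcomp Require Import all_boot all_order all_algebra.
From mathcomp Require Import all_classical all_reals all_analysis.
From mathcomp Require Import ring lra.
Import Order.TTheory GRing.Theory Num.Theory.
Import numFieldTopology.Exports numFieldNormedType.Exports.
Local Open Scope classical_set_scope.
Local Open Scope ring_scope.
Section Geo.
Variables (R : realType) (E : tvsType R) (D : set E).

Definition convK (K : set E) := forall x y t, K x -> K y -> 0 <= t <= 1 ->
  K (t *: x + (1 - t) *: y).

Lemma compact_level (K : set E) (f : E -> R) (c : R) :
  K `<=` D -> compact K -> {within D, continuous f} ->
  compact (K `&` [set x | c <= f x]).
Proof.
move=> KD cK cf.
have cK' : compact (K `&` D : set (subspace D)).
  by apply/compact_subspaceIP; rewrite setIidl.
have cl : closed ([set x | c <= f x] : set (subspace D)).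
  apply: (@preimage_closed (subspace D) R f [set y | c <= y]); last exact: closed_ge.
  by move=> x _; apply: cf.
have := compact_closedI cK' cl.
rewrite setIAC => /compact_subspaceIP.
by rewrite setIidl // => x [] /KD.
Qed.


Lemma claim (K : set E) (a b : E -> R) :
  K `<=` D -> compact K -> convK K -> is_aff D a -> is_aff D b ->
  (forall x, K x -> 0 <= a x -> b x < 0) ->
  exists2 s, 0 <= s & forall x, K x ->
    a x + s * b x <= 0 /\ (a x + s * b x = 0 -> 0 <= a x).
Proof.
move=> KD cK vK [ca aa] [cb ab] H.
case: (pselect (exists x, K x /\ 0 <= a x)); last first.
  move=> NA; exists 0 => // x Kx.
  have ax : a x < 0 by rewrite ltNge; apply/negP => ax; apply: NA; exists x.
  by rewrite mul0r addr0; split; [exact: ltW | move=> ->].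
move=> [x0 [Kx0 ax0]].
pose A := K `&` [set x | 0 <= a x].
have AD : A `<=` D by move=> x [/KD].
have cA : compact A by exact: compact_level.
pose r := fun x => a x / (- b x).
have cr : {within A, continuous r}.
  rewrite continuous_subspace_in => x; rewrite inE => -[Kx axp].
  have caA : {within A, continuous a} by apply: (continuous_subspaceW AD ca).
  have cbA : {within A, continuous b} by apply: (continuous_subspaceW AD cb).
  apply: cvgM; first exact: caA.
  apply: cvgV; first by rewrite oppr_eq0 lt_eqF // H.
  by apply: cvgN; exact: cbA.
have [c cA' cmax] := compact_EVT_max (ex_intro _ x0 (conj Kx0 ax0)) cA cr.
move: (cA'); rewrite inE => -[Kc ac].
have bc := H c Kc ac.
have nbc : 0 < - b c by rewrite oppr_gt0.
exists (r c); first by rewrite /r divr_ge0 // ltW.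
move=> x Kx.
have [axp|axn] := leP 0 (a x).
  have bx := H x Kx axp.
  have : r x <= r c by apply: cmax; rewrite inE.
  rewrite /r ler_pdivrMr ?oppr_gt0 // => h.
  split; last by [].
  by move: h; rewrite mulrN; lra.
have [bxn|bxp] := leP (b x) 0.
  have : a x + r c * b x < 0.
    rewrite -(addr0 0) ltr_leD //; rewrite mulr_ge0_le0 // /r divr_ge0 // ltW //.
  by move=> h; split; [exact: ltW | move=> e; move: h; rewrite e ltxx].
pose d := b x - b c.
have d0 : 0 < d by rewrite /d subr_gt0 (lt_trans bc).
pose t := b x / d.
have t01 : 0 <= t <= 1.
  apply/andP; split; first by rewrite /t divr_ge0 // ltW.
  by rewrite /t ler_pdivrMr // mul1r /d; lra.
have Kz := vK c x t Kc Kx t01.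
have bz : b (t *: c + (1 - t) *: x) = 0.
  rewrite (ab _ _ _ (KD _ Kc) (KD _ Kx) t01) /t /d; field; by rewrite -/d gt_eqF.
have az : a (t *: c + (1 - t) *: x) < 0.
  by rewrite ltNge; apply/negP => /(H _ Kz); rewrite bz ltxx.
move: az; rewrite (aa _ _ _ (KD _ Kc) (KD _ Kx) t01) => az.
have key : b x * a c - b c * a x < 0.
  have -> : b x * a c - b c * a x = (t * a c + (1 - t) * a x) * d.
    by rewrite /t /d; field; rewrite -/d gt_eqF.
  by rewrite pmulr_llt0.
have : a x + r c * b x < 0.
  have -> : a x + r c * b x = (b x * a c - b c * a x) / (- b c).
    by rewrite /r; field; rewrite lt_eqF.
  by rewrite pmulr_llt0 // invr_gt0.
by move=> h; split; [exact: ltW | move=> e; move: h; rewrite e ltxx].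
Qed.


Lemma two_dim (K : set E) (a b : E -> R) :
  K `<=` D -> compact K -> convK K -> is_aff D a -> is_aff D b ->
  (forall al be, 0 <= al -> 0 <= be -> exists2 x, K x & 0 <= al * a x + be * b x) ->
  exists2 x, K x & 0 <= a x /\ 0 <= b x.
Proof.
move=> KD cK vK fa fb Hc.
case: (pselect (exists2 x, K x & 0 <= a x /\ 0 <= b x)) => // Hn.
have H1 : forall x, K x -> 0 <= a x -> b x < 0.
  by move=> x Kx ax; rewrite ltNge; apply/negP => bx; apply: Hn; exists x.
have H2 : forall x, K x -> 0 <= b x -> a x < 0.
  by move=> x Kx bx; rewrite ltNge; apply/negP => ax; apply: Hn; exists x.
have [s s0 hs] := claim _ _ _ KD cK vK fa fb H1.
have [t t0 ht] := claim _ _ _ KD cK vK fb fa H2.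
have [x Kx hx] := Hc (1 + t) (1 + s) (addr_ge0 ler01 t0) (addr_ge0 ler01 s0).
have [h1 e1] := hs x Kx; have [h2 e2] := ht x Kx.
have ea : a x + s * b x = 0 by lra.
have eb : b x + t * a x = 0 by lra.
by exists x => //; split; [exact: e1 | exact: e2].
Qed.

Fixpoint cone (s : seq (E -> R)) (h : E -> R) : Prop :=
  match s with
  | [::] => h = (fun _ => 0)
  | a :: s' => exists2 mu, 0 <= mu &
      exists2 h', cone s' h' & h = (fun x => mu * a x + h' x)
  end.

Fixpoint all_aff (s : seq (E -> R)) : Prop :=
  match s with [::] => True | a :: s' => is_aff D a /\ all_aff s' end.

Fixpoint all_nn (s : seq (E -> R)) (x : E) : Prop :=
  match s with [::] => True | a :: s' => 0 <= a x /\ all_nn s' x end.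

Lemma cone_scale s h al : 0 <= al -> cone s h -> cone s (fun x => al * h x).
Proof.
elim: s h => [|a s IH] h al0 /=.
  by move=> ->; rewrite mulr0.
move=> [mu mu0 [h' ch' ->]]; exists (al * mu); first exact: mulr_ge0.
exists (fun x => al * h' x); first exact: IH.
by apply: funext => x; rewrite mulrDr mulrA.
Qed.

Lemma aff_lin (f g : E -> R) al be : is_aff D f -> is_aff D g ->
  is_aff D (fun x => al * f x + be * g x).
Proof.
move=> [cf af] [cg ag]; split.
  move=> x; apply: cvgD; apply: cvgM; [exact: cvg_cst|exact: cf|exact: cvg_cst|exact: cg].
by move=> x y t Dx Dy t01; rewrite af // ag //; ring.
Qed.

Lemma aff_cst c : is_aff D (fun _ => c).
Proof. by split; [move=> x; exact: cvg_cst | move=> *; ring]. Qed.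

Lemma cone_aff s h : all_aff s -> cone s h -> is_aff D h.
Proof.
elim: s h => [|a s IH] h /=; first by move=> _ ->; exact: aff_cst.
move=> [fa fs] [mu _ [h' ch' ->]].
have := @aff_lin _ _ mu 1 fa (IH _ fs ch').
by congr is_aff; apply: funext => x; rewrite mul1r.
Qed.

Lemma multi s : forall K, K `<=` D -> compact K -> convK K -> all_aff s ->
  (forall h, cone s h -> exists2 x, K x & 0 <= h x) ->
  exists2 x, K x & all_nn s x.
Proof.
elim: s => [|a s IH] K KD cK vK /=.
  by move=> _ /(_ _ erefl) [x Kx _]; exists x.
move=> [fa fs] Hc.
pose K' := K `&` [set x | 0 <= a x].
have K'D : K' `<=` D by move=> x [/KD].
have cK' : compact K' by apply: compact_level => //; case: fa.
have vK' : convK K'.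
  move=> x y t [Kx ax] [Ky ay] t01; split; first exact: vK.
  case: fa => _ af /=; rewrite (af _ _ _ (KD _ Kx) (KD _ Ky) t01).
  by case/andP: t01 => t0 t1; rewrite addr_ge0 // mulr_ge0 // subr_ge0.
have [x [Kx ax] hx] : exists2 x, K' x & all_nn s x.
  apply: IH => // h ch.
  have [x Kx [hx ax]] : exists2 x, K x & 0 <= h x /\ 0 <= a x.
    apply: (two_dim _ _ _ KD cK vK (cone_aff _ _ fs ch) fa).
    move=> al be al0 be0.
    have [x Kx hx] := Hc (fun x => be * a x + al * h x)
      (ex_intro2 _ _ be be0 (ex_intro2 _ _ _ (cone_scale _ _ _ al0 ch) erefl)).
    by exists x => //; rewrite addrC.
  by exists x.
by exists x.
Qed.


Variables (G : zmodType) (psi : G -> E -> R) (w : G -> R) (g0 : G).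
Hypotheses (cD : compact D) (vD : convK D) (nD : D !=set0)
  (Hpsi : forall g, is_aff D (psi g))
  (Hadd : forall g h x, D x -> psi (g + h) x = psi g x + psi h x)
  (Hg0 : forall x, D x -> psi g0 x = 1)
  (Hw : is_state (pos_cone D psi) g0 w).

Lemma psi0 x : D x -> psi 0 x = 0.
Proof.
move=> Dx; have := Hadd 0 0 x Dx; rewrite addr0; lra.
Qed.

Lemma psiN g x : D x -> psi (- g) x = - psi g x.
Proof.
move=> Dx; have := Hadd g (- g) x Dx; rewrite subrr psi0 //; lra.
Qed.

Lemma psiMn g n x : D x -> psi (g *+ n) x = n%:R * psi g x.
Proof.
move=> Dx; elim: n => [|n IH]; first by rewrite mulr0n psi0 // mul0r.
by rewrite mulrS Hadd // IH mulrS mulrDl mul1r.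
Qed.

Lemma psiMz g z x : D x -> psi (g *~ z) x = z%:~R * psi g x.
Proof.
move=> Dx; case: z => n.
  by rewrite -pmulrn psiMn.
by rewrite NegzE mulrNz psiN // -pmulrn psiMn // mulrNz mulNr.
Qed.

Lemma w0 : w 0 = 0.
Proof.
case: Hw => wD _ _; have := wD 0 0; rewrite addr0; lra.
Qed.

Lemma wN g : w (- g) = - w g.
Proof.
case: Hw => wD _ _; have := wD g (- g); rewrite subrr w0; lra.
Qed.

Lemma wMn g n : w (g *+ n) = n%:R * w g.
Proof.
case: Hw => wD _ _; elim: n => [|n IH]; first by rewrite mulr0n w0 mul0r.
by rewrite mulrS wD IH mulrS mulrDl mul1r.
Qed.

Lemma wMz g z : w (g *~ z) = z%:~R * w g.
Proof.
case: z => n; first by rewrite -pmulrn wMn.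
by rewrite NegzE mulrNz wN -pmulrn wMn mulrNz mulNr.
Qed.


Lemma noneg g : ~ (forall x, D x -> psi g x + 2 <= w g).
Proof.
move=> H; case: (Hw) => wD wle wg0.
pose r := Num.floor (w g - 1).
have r1 : r%:~R <= w g - 1 := floor_le _.
have r2 : w g - 1 < (r + 1)%:~R := floorD1_gt _.
rewrite rmorphD /= in r2.
have : w g <= w (g0 *~ r).
  apply: wle; left => x Dx.
  rewrite Hadd // psiN // psiMz // Hg0 // mulr1.
  have := H x Dx; lra.
rewrite wMz wg0 mulr1; lra.
Qed.

Definition F g := fun x => psi g x - w g.

Lemma boundF g : exists B, forall x, D x -> `|F g x| <= B.
Proof.
have cg : {within D, continuous psi g} by case: (Hpsi g).
have [c1 c1D h1] := compact_EVT_max nD cD cg.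
have cg' : {within D, continuous (fun x => - psi g x)}.
  by move=> x; apply: cvgN; exact: cg.
have [c2 c2D h2] := compact_EVT_max nD cD cg'.
exists (`|psi g c1 - w g| + `|psi g c2 - w g|) => x Dx.
have := h1 x (mem_set Dx); have := h2 x (mem_set Dx).
have n1 := ler_norm (psi g c1 - w g).
have n2 := ler_norm (- (psi g c2 - w g)); rewrite normrN in n2.
have p1 := normr_ge0 (psi g c1 - w g); have p2 := normr_ge0 (psi g c2 - w g).
rewrite /F ler_norml => a1 a2; apply/andP; split; lra.
Qed.

Lemma approx l h : cone (map F l) h -> exists C, forall N : nat, exists g',
  forall x, D x -> `|N%:R * h x - F g' x| <= C.
Proof.
case: (Hw) => wD _ _.
elim: l h => [|a l IH] h /=.
  move=> ->; exists 0 => N; exists 0 => x Dx.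
  by rewrite /F psi0 // w0 subrr mulr0 subrr normr0.
move=> [mu mu0 [h' ch' ->]].
have [C' HC'] := IH _ ch'; have [B HB] := boundF a.
exists (B + C') => N.
pose p := Num.floor (N%:R * mu).
have p1 : p%:~R <= N%:R * mu := floor_le _.
have p2 : N%:R * mu < (p + 1)%:~R := floorD1_gt _.
rewrite rmorphD /= in p2.
have [g'' Hg''] := HC' N; exists (a *~ p + g'') => x Dx.
have -> : N%:R * (mu * F a x + h' x) - F (a *~ p + g'') x =
    (N%:R * mu - p%:~R) * F a x + (N%:R * h' x - F g'' x).
  by rewrite /F Hadd // wD psiMz // wMz; ring.
apply: (le_trans (ler_normD _ _)); apply: lerD; last exact: Hg''.
rewrite normrM -[B]mul1r; apply: ler_pM => //.
by rewrite ger0_norm; lra.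
exact: HB.
Qed.


Lemma all_aff_map l : all_aff (map F l).
Proof.
elim: l => [|a l IH] //=; split => //.
have := @aff_lin _ _ 1 (- w a) (Hpsi a) (aff_cst 1).
by congr is_aff; apply: funext => x; rewrite /F mul1r mulr1.
Qed.

Lemma cone_ok l h : cone (map F l) h -> exists2 x, D x & 0 <= h x.
Proof.
move=> ch.
case: (pselect (exists2 x, D x & 0 <= h x)) => // Hn; exfalso.
have hneg : forall x, D x -> h x < 0.
  by move=> x Dx; rewrite ltNge; apply/negP => hx; apply: Hn; exists x.
have [ch' _] := cone_aff _ _ (all_aff_map l) ch.
have [c cD' hc] := compact_EVT_max nD cD ch'.
have Dc : D c by rewrite inE in cD'.
have m0 := hneg c Dc.
have [C HC] := approx _ _ ch.
have C0 : 0 <= C by have [g' /(_ c Dc)] := HC 0%N; apply: le_trans.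
pose N := Num.bound ((C + 2) / (- h c)).
have hN : (C + 2) / (- h c) < N%:R.
  by apply: archi_boundP; rewrite divr_ge0 //; lra.
have hN' : C + 2 < N%:R * (- h c).
  by rewrite -ltr_pdivrMr //; lra.
have [g' Hg'] := HC N.
apply: (noneg g') => x Dx.
have := Hg' x Dx; rewrite ler_norml => /andP[e2 _].
have hx : N%:R * h x <= N%:R * h c by rewrite ler_wpM2l // hc // inE.
move: e2 hN' hx; rewrite /F mulrN; set u := N%:R * h x; set v := N%:R * h c; lra.
Qed.

Lemma all_nn_map l x : all_nn (map F l) x -> forall g, g \in l -> w g <= psi g x.
Proof.
elim: l => [|a l IH] //= [ha hl] g; rewrite in_cons => /orP[/eqP ->|gl].
  by move: ha; rewrite /F subr_ge0.
exact: IH.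
Qed.

Lemma finite_pt (l : seq G) : exists2 x, D x & forall g, g \in l -> w g <= psi g x.
Proof.
have [x Dx hx] := multi (map F l) D (@subset_refl _ D) cD vD (all_aff_map l)
  (fun h ch => cone_ok l h ch).
by exists x => //; exact: all_nn_map.
Qed.


End Geo.

Section Fin.
Variables (R : realType) (E : tvsType R) (D : set E).
Variables (G : countZmodType) (psi : G -> E -> R) (w : G -> R).
Hypotheses (cD : compact D) (Hpsi : forall g, {within D, continuous psi g})
  (fin : forall l : seq G, exists2 x, D x & forall g, g \in l -> w g <= psi g x).

Lemma fip : exists2 x, D x & forall g, w g <= psi g x.
Proof.
pose P g := D `&` [set x | w g <= psi g x].
have finP : finI setT P.
  move=> D' _; have [x Dx hx] := fin (finmap.enum_fset D').
  exists x => g /= gD'; split => //; exact: hx.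
have FP := finI_filter finP.
have FD : filter_from (finI_from setT P) id D.
  by exists (P 0); [exact: finI_from1 | move=> x []].
have [p [Dp clp]] := cD _ FP FD.
exists p => // g; rewrite leNgt; apply/negP => lt.
move/subspace_continuousP: (Hpsi g) => /(_ p Dp) cg.
have nB : within D (nbhs p) (psi g @^-1` [set y | y < w g]).
  by apply: cg; exact: lt_nbhsl.
have FPg : filter_from (finI_from setT P) id (P g).
  by exists (P g); [exact: finI_from1|].
have [y [[Dy hy] hB]] := clp _ _ FPg nB.
by move: (hB Dy) => /=; rewrite ltNge hy.
Qed.
End Fin.

Theorem lemma5p2 (R : realType) (E : tvsType R) (D : set E)
  (G : countZmodType) (psi : G -> E -> R) :
  choquet_simplex D -> metrizable_set D ->
  (forall g, is_aff D (psi g)) ->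
  (forall g h x, D x -> psi (g + h) x = psi g x + psi h x) ->
  (exists g1, forall x, D x -> psi g1 x = 1) ->
  forall g0 : G, (forall x, D x -> psi g0 x = 1) ->
  forall w : G -> R, is_state (pos_cone D psi) g0 w ->
  exists2 x, D x & forall g, w g = psi g x.
Proof.
move=> [_ nD cD vD _] _ Haff Hadd _ g0 Hg0 w Hw.
have vD' : @convK R E D by exact: vD.
have fin : forall l : seq G, exists2 x, D x & forall g, g \in l -> w g <= psi g x.
  by move=> l; eapply finite_pt; eassumption.
have [x Dx hx] := @fip R E D G psi w cD (fun g => (Haff g).1) fin.
exists x => // g; apply/eqP; rewrite eq_le hx /=.
have := hx (- g).
have -> : w (- g) = - w g by eapply wN; eassumption.
have -> : psi (- g) x = - psi g x by eapply psiN; eassumption.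
by rewrite lerN2.
Qed.
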